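(* Let $X\in\mathbb{R}^{n\times m}$ ($m\ge n$) be a full rank matrix, and let $\mathcal S\subseteq[m]$ be any subset of cardinality $k$ ($n\le k\le m$) such that $X_{\mathcal S}$ is full rank. For $i=1,\dots,n$, let $Y_i\in\mathbb{R}^{(n-1)\times m}$ be the matrix obtained from $X$ by removing its $i$-th row. Then $$\|X_{\mathcal S}^{\dagger}\|_F^2=\frac{\sum_{i=1}^n\det\big((Y_i)_{\mathcal S}(Y_i)_{\mathcal S}^T\big)}{\det\big(X_{\mathcal S}X_{\mathcal S}^T\big)}.$$ Moreover, writing $X=[x_1,\dots,x_m]$ in columns, if $\mathcal S$ has cardinality exactly $n$ then $$\|X_{\mathcal S}^{-1}\|_F^2\le \|X^{\dagger}\|_2^2\cdot\frac{\sum_{j=1}^m\sum_{i=1}^n\det\big(X_{\mathcal S}(i\to x_j)\big)^2}{\det(X_{\mathcal S})^2},$$ and if $X$ has orthonormal rows this inequality is an equality.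
   Context: $[m]=\{1,\dots,m\}$; for $\mathcal S\subseteq[m]$, $X_{\mathcal S}$ (resp. $(Y_i)_{\mathcal S}$) is the submatrix of columns indexed by $\mathcal S$, in increasing order. $A^\dagger$ is the Moore–Penrose pseudo-inverse; $\|\cdot\|_2,\|\cdot\|_F$ spectral and Frobenius norms. For a square matrix $A$, index $i$ and vector $v$, $A(i\to v)$ denotes the matrix obtained by replacing the $i$-th column of $A$ by $v$. *)

(* Defs.v *)
From HB Require Import structures.
From mathcomp Require Import all_boot all_order all_algebra.
From mathcomp Require Import classical_sets reals.
From Stdlib Require Import ClassicalEpsilon.
Set Implicit Arguments. Unset Strict Implicit. Unset Printing Implicit Defensive.
Import Order.TTheory GRing.Theory Num.Theory.
Local Open Scope ring_scope.
Local Open Scope classical_set_scope.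

Section Defs.
Variable R : realType.

Definition penrose (p q : nat) (A : 'M[R]_(p, q)) (B : 'M[R]_(q, p)) : Prop :=
  [/\ A *m B *m A = A, B *m A *m B = B,
      (A *m B)^T = A *m B & (B *m A)^T = B *m A].

(* The Moore-Penrose pseudo-inverse (it exists and is unique for real matrices). *)
Definition pinv (p q : nat) (A : 'M[R]_(p, q)) : 'M[R]_(q, p) :=
  epsilon (inhabits 0) (penrose A).

Definition frob_norm (p q : nat) (A : 'M[R]_(p, q)) : R :=
  Num.sqrt (\sum_(i < p) \sum_(j < q) A i j ^+ 2).

Definition vnorm (q : nat) (v : 'cV[R]_q) : R :=
  Num.sqrt (\sum_(i < q) v i 0 ^+ 2).

Definition spec_norm (p q : nat) (A : 'M[R]_(p, q)) : R :=
  sup [set vnorm (A *m v) | v in [set v : 'cV[R]_q | vnorm v = 1]].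

(* Submatrix of the columns indexed by (the increasing enumeration) f. *)
Definition colsel (p q k : nat) (f : 'I_k -> 'I_q) (A : 'M[R]_(p, q)) : 'M[R]_(p, k) :=
  \matrix_(i < p, j < k) A i (f j).

Definition repl_col (p : nat) (A : 'M[R]_p) (i : 'I_p) (v : 'cV[R]_p) : 'M[R]_p :=
  \matrix_(r < p, c < p) (if c == i then v r 0 else A r c).

End Defs.

(* Main.v *)
Require Import Defs.
From HB Require Import structures.
From mathcomp Require Import all_boot all_order all_algebra.
From mathcomp Require Import classical_sets reals.
From mathcomp Require Import ring lra.
From Stdlib Require Import ClassicalEpsilon.
Set Implicit Arguments. Unset Strict Implicit. Unset Printing Implicit Defensive.
Import Order.TTheory GRing.Theory Num.Theory.
Local Open Scope ring_scope.

Section H.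
Variable R : realType.

Lemma cs_sum q (a b : 'I_q -> R) :
  (\sum_i a i * b i) ^+ 2 <= (\sum_i a i ^+ 2) * (\sum_i b i ^+ 2).
Proof.
set A := \sum_i a i ^+ 2; set B := \sum_i b i ^+ 2; set C := \sum_i a i * b i.
have quad t : 0 <= t ^+ 2 * A - 2 * t * C + B.
  have -> : t ^+ 2 * A - 2 * t * C + B = \sum_i (t * a i - b i) ^+ 2.
    rewrite /A /B /C mulr_sumr mulr_sumr -sumrN -!big_split /=.
    by apply: eq_bigr => i _; ring.
  by apply: sumr_ge0 => i _; exact: sqr_ge0.
have A0 : 0 <= A by apply: sumr_ge0 => i _; exact: sqr_ge0.
have B0 : 0 <= B by apply: sumr_ge0 => i _; exact: sqr_ge0.
have [Az|Ap] := eqVneq A 0.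
  have C0 : C = 0.
    apply/eqP; apply/negPn/negP => Cn.
    have := quad ((B + 1) / (2 * C)); rewrite Az mulr0 sub0r.
    have -> : 2 * ((B + 1) / (2 * C)) * C = B + 1.
      by field.
    lra.
  by rewrite C0 Az expr0n /= mul0r.
have Apos : 0 < A by rewrite lt_def Ap A0.
have := quad (C / A).
have -> : (C / A) ^+ 2 * A - 2 * (C / A) * C + B = B - C ^+ 2 / A.
  by field.
rewrite subr_ge0 ler_pdivrMr // => h.
by rewrite mulrC.
Qed.


Lemma rV_sq_eq0 q (u : 'rV[R]_q) : u *m u^T = 0 -> u = 0.
Proof.
move=> h; have := congr1 (fun M : 'M_1 => M 0 0) h; rewrite !mxE => hs.
have hsq : \sum_i u 0 i ^+ 2 = 0.
  rewrite -[RHS]hs; by apply: eq_bigr => k _; rewrite mxE expr2.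
apply/matrixP => i j; rewrite (ord1 i) mxE.
apply/eqP; rewrite -sqrf_eq0; apply/eqP.
by apply: (psumr_eq0P (fun i _ => sqr_ge0 (u 0 i)) hsq).
Qed.

Lemma AAt_unit p q (A : 'M[R]_(p, q)) : \rank A = p -> A *m A^T \in unitmx.
Proof.
move=> rA; have fA : row_free A by rewrite /row_free rA.
rewrite -row_free_unit -kermx_eq0; apply/negP => /negP /rowV0Pn [v /sub_kermxP vK vnz].
have : v *m A = 0.
  apply: rV_sq_eq0; rewrite trmx_mul mulmxA -(mulmxA v) vK mul0mx //.
by move/eqP; rewrite mulmx_free_eq0 // (negbTE vnz).
Qed.

Lemma penrose_char p q (A : 'M[R]_(p, q)) B : \rank A = p -> penrose A B ->
  [/\ A *m B = 1%:M, B^T *m B = invmx (A *m A^T) & B = A^T *m invmx (A *m A^T)].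
Proof.
move=> rA [h1 h2 h3 h4]; have U := AAt_unit rA.
have AB1 : A *m B = 1%:M.
  have e : A *m B *m (A *m A^T) = A *m A^T by rewrite mulmxA h1.
  by rewrite -[A *m B]mulmx1 -(mulmxV U) mulmxA e.
have BE : B = A^T *m (B^T *m B).
  by rewrite mulmxA -trmx_mul h4 h2.
have CE : B^T *m B = invmx (A *m A^T).
  have e : A *m A^T *m (B^T *m B) = 1%:M by rewrite -mulmxA -BE.
  by rewrite -[B^T *m B]mul1mx -(mulVmx U) -mulmxA e mulmx1.
by split=> //; rewrite -CE.
Qed.

Lemma pinv_penrose p q (A : 'M[R]_(p, q)) : \rank A = p -> penrose A (pinv A).
Proof.
move=> rA; rewrite /pinv; apply: epsilon_spec.
have U := AAt_unit rA.
set M := A *m A^T.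
have MT : M^T = M by rewrite /M trmx_mul trmxK.
have AB1 : A *m (A^T *m invmx M) = 1%:M by rewrite mulmxA mulmxV.
exists (A^T *m invmx M); split.
- by rewrite AB1 mul1mx.
- by rewrite -mulmxA AB1 mulmx1.
- by rewrite AB1 trmx1.
- by rewrite !trmx_mul trmx_inv MT trmxK mulmxA.
Qed.


Lemma frob_sq p q (A : 'M[R]_(p, q)) :
  frob_norm A ^+ 2 = \sum_i \sum_j A i j ^+ 2.
Proof.
rewrite /frob_norm sqr_sqrtr //; apply: sumr_ge0 => i _.
by apply: sumr_ge0 => j _; exact: sqr_ge0.
Qed.

Lemma sumsq_tr p q (B : 'M[R]_(p, q)) :
  \sum_i \sum_j B i j ^+ 2 = \tr (B^T *m B).
Proof.
rewrite exchange_big /mxtrace; apply: eq_bigr => j _; rewrite mxE.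
by apply: eq_bigr => i _; rewrite mxE expr2.
Qed.

Lemma tr_inv p (M : 'M[R]_p) : M \in unitmx ->
  \tr (invmx M) = (\sum_i \det (row' i (col' i M))) / \det M.
Proof.
move=> U; rewrite /invmx U mxtraceZ mulrC; congr (_ * _).
rewrite /mxtrace; apply: eq_bigr => i _; rewrite mxE /cofactor.
by rewrite -signr_odd addnn odd_double expr0 mul1r.
Qed.

Lemma rowcol_AAt p q (A : 'M[R]_(p, q)) i :
  row' i (col' i (A *m A^T)) = row' i A *m (row' i A)^T.
Proof.
apply/matrixP => r c; rewrite !mxE; apply: eq_bigr => k _; by rewrite !mxE.
Qed.

Lemma part1 p q (A : 'M[R]_(p, q)) : \rank A = p ->
  frob_norm (pinv A) ^+ 2 =
  (\sum_i \det (row' i A *m (row' i A)^T)) / \det (A *m A^T).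
Proof.
move=> rA; have [_ CE _] := penrose_char rA (pinv_penrose rA).
rewrite frob_sq sumsq_tr CE tr_inv ?AAt_unit //.
by congr (_ / _); apply: eq_bigr => i _; rewrite rowcol_AAt.
Qed.


Definition nsq q (v : 'cV[R]_q) := \sum_i v i 0 ^+ 2.

Lemma nsq_ge0 q (v : 'cV[R]_q) : 0 <= nsq v.
Proof. by apply: sumr_ge0 => i _; exact: sqr_ge0. Qed.

Lemma vnormE q (v : 'cV[R]_q) : vnorm v = Num.sqrt (nsq v).
Proof. by []. Qed.

Lemma vnorm_sq q (v : 'cV[R]_q) : vnorm v ^+ 2 = nsq v.
Proof. by rewrite /vnorm sqr_sqrtr // nsq_ge0. Qed.

Lemma nsq_mx q (v : 'cV[R]_q) : nsq v = (v^T *m v) 0 0.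
Proof. by rewrite mxE; apply: eq_bigr => i _; rewrite mxE expr2. Qed.

Lemma nsq_scale q c (v : 'cV[R]_q) : nsq (c *: v) = c ^+ 2 * nsq v.
Proof.
rewrite /nsq mulr_sumr; apply: eq_bigr => i _; by rewrite mxE exprMn.
Qed.

Lemma nsq_mul_bound p q (P : 'M[R]_(p, q)) v :
  nsq (P *m v) <= (\sum_i \sum_j P i j ^+ 2) * nsq v.
Proof.
rewrite /nsq mulr_suml; apply: ler_sum => i _; rewrite mxE.
exact: (cs_sum (fun j => P i j) (fun j => v j 0)).
Qed.

Lemma nsq_eq0 q (v : 'cV[R]_q) : nsq v = 0 -> v = 0.
Proof.
move=> h; apply/matrixP => i j; rewrite (ord1 j) mxE.
apply/eqP; rewrite -sqrf_eq0; apply/eqP.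
by apply: (psumr_eq0P (fun i _ => sqr_ge0 (v i 0)) h).
Qed.

Lemma spec_unit p q (P : 'M[R]_(p, q)) v : vnorm v = 1 ->
  vnorm (P *m v) <= spec_norm P.
Proof.
move=> hv; apply: ub_le_sup; last by exists v.
exists (Num.sqrt (\sum_i \sum_j P i j ^+ 2)) => y [w /= hw <-].
rewrite vnormE; apply: ler_wsqrtr.
have := nsq_mul_bound P w; rewrite -(vnorm_sq w) hw expr1n mulr1; exact.
Qed.

Lemma spec_bound p q (P : 'M[R]_(p, q)) v :
  nsq (P *m v) <= spec_norm P ^+ 2 * nsq v.
Proof.
have [h0|hn] := eqVneq (nsq v) 0.
  by rewrite h0 (nsq_eq0 h0) mulmx0 mulr0 /nsq big1 // => i _; rewrite mxE expr0n.
have apos : 0 < nsq v by rewrite lt_def hn nsq_ge0.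
set t := Num.sqrt (nsq v).
have tpos : 0 < t by rewrite sqrtr_gt0.
have t2 : t ^+ 2 = nsq v by rewrite sqr_sqrtr // nsq_ge0.
have hv' : vnorm (t^-1 *: v) = 1.
  rewrite vnormE nsq_scale exprVn t2 mulVf // sqrtr1 //; exact: lt0r_neq0.
have hb := spec_unit P hv'.
have n0 : 0 <= vnorm (P *m (t^-1 *: v)) by exact: sqrtr_ge0.
have hb2 : nsq (P *m (t^-1 *: v)) <= spec_norm P ^+ 2.
  rewrite -vnorm_sq !expr2; apply: ler_pM => //.
rewrite -scalemxAr nsq_scale exprVn t2 in hb2.
by rewrite -ler_pdivrMr // mulrC.
Qed.

Lemma row_bound n m (X : 'M[R]_(n, m)) P : X *m P = 1%:M ->
  forall u : 'cV_n, nsq u <= spec_norm P ^+ 2 * nsq (X^T *m u).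
Proof.
move=> XP u; set w := X^T *m u.
have uE : u = P^T *m w by rewrite /w mulmxA -trmx_mul XP trmx1 mul1mx.
have e : nsq u = \sum_j (P *m u) j 0 * w j 0.
  rewrite nsq_mx {2}uE mulmxA -trmx_mul mxE.
  by apply: eq_bigr => j _; rewrite mxE.
have cs := cs_sum (fun j => (P *m u) j 0) (fun j => w j 0).
rewrite -e -/(nsq (P *m u)) -/(nsq w) in cs.
have sb := spec_bound P u.
have [h0|hn] := eqVneq (nsq u) 0.
  by rewrite h0 mulr_ge0 ?sqr_ge0 ?nsq_ge0.
have apos : 0 < nsq u by rewrite lt_def hn nsq_ge0.
have : nsq u ^+ 2 <= spec_norm P ^+ 2 * nsq u * nsq w.
  apply: (le_trans cs); apply: ler_wpM2r; [exact: nsq_ge0|exact: sb].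
by move=> h; rewrite -(ler_pM2r apos) -expr2 (le_trans h) // mulrAC.
Qed.


Lemma cramer n (A : 'M[R]_n) i v : A \in unitmx ->
  \det (repl_col A i v) = \det A * (invmx A *m v) i 0.
Proof.
move=> U; have d0 : \det A != 0 by rewrite -unitfE -unitmxE.
rewrite (expand_det_col _ i) /invmx U -scalemxAl mxE mulrA mulfV // mul1r mxE.
apply: eq_bigr => r _; rewrite !mxE eqxx mulrC; congr (_ * _).
rewrite /cofactor; congr (_ * \det (row' r _)).
apply/matrixP => a b; rewrite !mxE.
by rewrite eq_sym (negbTE (neq_lift i b)).
Qed.

Lemma cramer_sum n m (A : 'M[R]_n) (X : 'M[R]_(n, m)) : A \in unitmx ->
  (\sum_j \sum_i \det (repl_col A i (col j X)) ^+ 2) / \det A ^+ 2 =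
  \sum_i \sum_j (invmx A *m X) i j ^+ 2.
Proof.
move=> U; have d0 : \det A != 0 by rewrite -unitfE -unitmxE.
rewrite [RHS]exchange_big mulr_suml; apply: eq_bigr => j _.
rewrite mulr_suml; apply: eq_bigr => i _.
rewrite cramer // exprMn mulrC mulrA mulVf ?expf_neq0 // mul1r.
by congr (_ ^+ 2); rewrite !mxE; apply: eq_bigr => k _; rewrite mxE.
Qed.

Lemma nsq_row n q (M : 'M[R]_(n, q)) i : nsq (row i M)^T = \sum_j M i j ^+ 2.
Proof. by apply: eq_bigr => j _; rewrite !mxE. Qed.

Lemma ineq_case n m (X : 'M[R]_(n, m)) P (B : 'M[R]_n) : X *m P = 1%:M ->
  \sum_i \sum_c B i c ^+ 2 <=
  spec_norm P ^+ 2 * \sum_i \sum_j (B *m X) i j ^+ 2.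
Proof.
move=> XP; rewrite mulr_sumr; apply: ler_sum => i _.
have := row_bound XP (row i B)^T.
by rewrite -trmx_mul -row_mul !nsq_row.
Qed.

Local Open Scope classical_set_scope.
Lemma eq_case n m (X : 'M[R]_(n, m)) (B : 'M[R]_n) : X *m X^T = 1%:M ->
  \sum_i \sum_c B i c ^+ 2 =
  spec_norm X^T ^+ 2 * \sum_i \sum_j (B *m X) i j ^+ 2.
Proof.
case: n X B => [|n] X B XX; first by rewrite !big_ord0 mulr0.
have nX u : nsq (X^T *m u) = nsq u.
  by rewrite !nsq_mx trmx_mul trmxK mulmxA -(mulmxA _ X) XX mulmx1.
have s1 : spec_norm X^T = 1.
  rewrite /spec_norm.
  have -> : [set vnorm (X^T *m v) | v in [set v : 'cV[R]_n.+1 | vnorm v = 1]]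
            = [set 1]%classic.
    apply/seteqP; split => y /=.
      by case=> v /= hv <-; rewrite vnormE nX -vnormE hv.
    have hd : vnorm (delta_mx ord0 0 : 'cV[R]_n.+1) = 1.
      rewrite vnormE /nsq (bigD1 ord0) //= big1 ?addr0.
        by rewrite mxE !eqxx expr1n sqrtr1.
      by move=> k /negbTE kn; rewrite mxE kn expr0n.
    move=> ->; exists (delta_mx ord0 0) => //=.
    by rewrite vnormE nX -vnormE.
  by rewrite sup1.
rewrite s1 expr1n mul1r; apply: eq_bigr => i _.
by rewrite -!nsq_row row_mul trmx_mul nX.
Qed.

End H.

(* A subset S of [m] of cardinality k is encoded by the strictly increasing
   map f : 'I_k -> 'I_m enumerating it; Y_i = row' i X. *)
Theorem lemma3p8 (R : realType) (n m : nat) (X : 'M[R]_(n, m)) :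
  (n <= m)%N -> \rank X = n ->
  (forall (k : nat) (f : 'I_k -> 'I_m),
      {homo f : a b / (a < b)%N} -> (n <= k)%N ->
      \rank (colsel f X) = n ->
      frob_norm (pinv (colsel f X)) ^+ 2 =
        (\sum_(i < n) \det (colsel f (row' i X) *m (colsel f (row' i X))^T))
        / \det (colsel f X *m (colsel f X)^T))
  /\
  (forall f : 'I_n -> 'I_m,
      {homo f : a b / (a < b)%N} ->
      \rank (colsel f X) = n ->
      frob_norm (invmx (colsel f X)) ^+ 2 <=
        spec_norm (pinv X) ^+ 2 *
        ((\sum_(j < m) \sum_(i < n) \det (repl_col (colsel f X) i (col j X)) ^+ 2)
         / \det (colsel f X) ^+ 2)
      /\
      (X *m X^T = 1%:M ->
       frob_norm (invmx (colsel f X)) ^+ 2 =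
        spec_norm (pinv X) ^+ 2 *
        ((\sum_(j < m) \sum_(i < n) \det (repl_col (colsel f X) i (col j X)) ^+ 2)
         / \det (colsel f X) ^+ 2))).
Proof.
move=> _ rX; split.
  move=> k f _ _ rk; rewrite part1 //; congr (_ / _).
  apply: eq_bigr => i _.
  have -> : colsel f (row' i X) = row' i (colsel f X).
    by apply/matrixP => r c; rewrite !mxE.
  by [].
move=> f _ rk.
have U : colsel f X \in unitmx by rewrite -row_free_unit /row_free rk.
have [XP _ PE] := penrose_char rX (pinv_penrose rX).
rewrite frob_sq cramer_sum //; split.
  exact: ineq_case.
move=> XX; have -> : pinv X = X^T by rewrite PE XX invmx1 mulmx1.
exact: eq_case.
Qed.
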